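(* Let $f:\mathbb R\to\mathbb R$ be a Jones function and let $\varphi:\mathbb R\to\mathbb R$ be continuous and surjective. Then $\varphi\circ f$ is a Jones function.
   Context: A function $f:\mathbb R\to\mathbb R$ (identified with its graph in $\mathbb R^2$) is a Jones function if for every closed set $K\subset\mathbb R^2$ whose projection onto the $x$-axis, $\{x:\exists y,\ (x,y)\in K\}$, is uncountable, the graph of $f$ meets $K$. *)

(* Defs.v *)
From HB Require Import structures.
From mathcomp Require Import all_boot all_order all_algebra.
From mathcomp Require Import all_classical all_reals all_analysis.
Import numFieldNormedType.Exports.
Local Open Scope classical_set_scope.

Definition graph {R : realType} (f : R -> R) : set (R * R) :=
  [set p | p.2 = f p.1].

Definition xproj {R : realType} (K : set (R * R)) : set R :=
  [set x | exists y, K (x, y)].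

Definition Jones {R : realType} (f : R -> R) : Prop :=
  forall K : set (R * R), closed K -> ~ countable (xproj K) ->
    graph f `&` K !=set0.

(* Main.v *)
Require Import Defs.
From HB Require Import structures.
From mathcomp Require Import all_boot all_order all_algebra.
From mathcomp Require Import all_classical all_reals all_analysis.
Import numFieldNormedType.Exports.
Local Open Scope classical_set_scope.

Theorem proposition4p1 (R : realType) (f phi : R -> R) :
  Jones f -> continuous phi -> (forall y : R, exists x : R, phi x = y) -> Jones (phi \o f).
Proof.
move=> Jf cphi surj K cK ncK.
pose g := fun p : R * R => (p.1, phi p.2).
have cg : continuous g.
  move=> p; rewrite /g; apply: (@cvg_pair _ _ _ (nbhs p) (nbhs p.1) (nbhs (phi p.2))); first exact: cvg_fst.
  apply: cvg_comp; [exact: cvg_snd | exact: cphi].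
have cK' : closed (g @^-1` K) by move/continuous_closedP: cg; apply.
have Heq : xproj (g @^-1` K) = xproj K.
  apply/seteqP; split => x [y Hy].
    by exists (phi y).
  have [z hz] := surj y; by exists z; rewrite /preimage /g /= hz.
have ncK' : ~ countable (xproj (g @^-1` K)) by rewrite Heq.
have [[x y] [/= Hg HK]] := Jf _ cK' ncK'.
have Hy : y = f x := Hg.
subst y.
exists (x, phi (f x)); split; [reflexivity | exact: HK].
Qed.
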